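(* Let $\alpha\in(0,\frac{\pi}{2}]$ and let $S$ be a finite set of line segments in the plane such that any two segments of $S$ that cross do so at angle $\alpha$. If $\frac{\pi}{\alpha}$ is irrational, or $\frac{\pi}{\alpha}=\frac{p}{q}$ with $\gcd(p,q)=1$ and $p$ even, then there exists a subset $S'\subset S$ of pairwise noncrossing segments with $|S'|\geq\frac12|S|$. Otherwise $\frac{\pi}{\alpha}=\frac{p}{q}$ with $\gcd(p,q)=1$ and $p=2k+1$ for some $k\in\mathbb{N}$, and then there exists a subset $S'\subset S$ of pairwise noncrossing segments with $|S'|\geq\frac{k}{2k+1}|S|$. This holds under either of the following two notions of crossing.
   Context: Segments in $S$ may overlap (intersect in a segment of positive length). Standard notion: two segments cross if they intersect in a single point lying in the relative interior of both. Relaxed notion: given $S$ and a set $V$ of segment endpoints, two segments of $S$ cross if they intersect in a single point that is not in $V$. Two segments cross at angle $\alpha$ if the lines containing them meet at angle $\alpha$ (equivalently $\pi-\alpha$). *)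

(* Defs.v *)
From HB Require Import structures.
From mathcomp Require Import all_boot all_order all_algebra.
From mathcomp Require Import all_classical all_reals.
From mathcomp Require Import trigo.
Set Implicit Arguments. Unset Strict Implicit. Unset Printing Implicit Defensive.
Import Order.TTheory GRing.Theory Num.Theory.
Local Open Scope ring_scope.
Local Open Scope classical_set_scope.

Section Defs.
Variable R : realType.

Definition pt := (R * R)%type.
Definition segment := (pt * pt)%type.

Definition lerp (a b : pt) (t : R) : pt :=
  (a.1 + t * (b.1 - a.1), a.2 + t * (b.2 - a.2)).

Definition seg_set (s : segment) : set pt :=
  [set p | exists t : R, 0 <= t <= 1 /\ p = lerp s.1 s.2 t].

Definition seg_relint (s : segment) : set pt :=
  [set p | exists t : R, 0 < t < 1 /\ p = lerp s.1 s.2 t].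

Definition std_cross (s1 s2 : segment) : Prop :=
  exists p : pt, seg_set s1 `&` seg_set s2 = [set p] /\
                 seg_relint s1 p /\ seg_relint s2 p.

Definition relaxed_cross (V : set pt) (s1 s2 : segment) : Prop :=
  exists p : pt, seg_set s1 `&` seg_set s2 = [set p] /\ ~ V p.

Definition dir (s : segment) : pt := (s.2.1 - s.1.1, s.2.2 - s.1.2).
Definition dot (u v : pt) : R := u.1 * v.1 + u.2 * v.2.
Definition vnorm (u : pt) : R := Num.sqrt (dot u u).

(* angle in [0, pi/2] between the lines containing the two segments *)
Definition line_angle (s1 s2 : segment) : R :=
  acos (`| dot (dir s1) (dir s2) | / (vnorm (dir s1) * vnorm (dir s2))).

Definition cross_at_angle (alpha : R) (s1 s2 : segment) : Prop :=
  line_angle s1 s2 = alpha.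

End Defs.

(* Main.v *)
Require Import Defs.
From HB Require Import structures.
From mathcomp Require Import all_boot all_order all_algebra.
From mathcomp Require Import all_classical all_reals.
From mathcomp Require Import trigo.
From mathcomp Require Import ring lra zify.
Import Order.TTheory GRing.Theory Num.Theory.
Local Open Scope ring_scope.
Lemma coprime_div_gcd' A B : (0 < B)%N -> coprime (A %/ gcdn A B) (B %/ gcdn A B).
Proof.
move=> B0; set g := gcdn A B.
have g0 : (0 < g)%N by rewrite gcdn_gt0 B0 orbT.
have : (gcdn (A %/ g) (B %/ g) * g = g)%N.
  by rewrite muln_gcdl !divnK ?dvdn_gcdl ?dvdn_gcdr.
rewrite /coprime => h; apply/eqP; nia.
Qed.

Lemma sum_odd k : (\sum_(0 <= t < k.*2) odd t)%N = k.
Proof.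
elim: k => [|k IH]; first by rewrite big_geq.
by rewrite doubleS !big_nat_recr //= IH odd_double /= addn0 addn1.
Qed.

Lemma noadj M k (a b : 'I_M.+2) : (k.*2 <= M.+2)%N ->
  odd a -> (a < k.*2)%N -> odd b -> (b < k.*2)%N -> b <> a + 1.
Proof.
move=> hk oa la ob lb E.
have : nat_of_ord b = ((nat_of_ord a + 1) %% M.+2)%N by rewrite E /= modnDmr.
case: (ltnP (nat_of_ord a).+1 M.+2) => h.
  rewrite modn_small ?addn1 // => vb.
  by move: ob; rewrite vb /= oa.
have -> : (nat_of_ord a + 1 = M.+2)%N by lia.
by rewrite modnn => vb; move: ob; rewrite vb.
Qed.

Lemma comb (n M k : nat) (l : 'I_n -> 'I_M.+2) (adj : 'I_n -> 'I_n -> Prop) :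
  (k.*2 <= M.+2)%N ->
  (forall i j, i != j -> adj i j -> l j = l i + 1 \/ l i = l j + 1) ->
  exists I : {set 'I_n}, (forall i j, i \in I -> j \in I -> i != j -> ~ adj i j)
     /\ (k * n <= #|I| * M.+2)%N.
Proof.
move=> hk hadj.
pose P (t : 'I_M.+2) := odd t && (t < k.*2)%N.
pose I (s : 'I_M.+2) := [set i | P (l i - s)].
have indep s : forall i j, i \in I s -> j \in I s -> i != j -> ~ adj i j.
  move=> i j; rewrite !inE => /andP[oi li] /andP[oj lj] ij aij.
  case: (hadj i j ij aij) => E.
    by have := @noadj _ _ _ _ hk oi li oj lj; apply; rewrite E addrAC.
  by have := @noadj _ _ _ _ hk oj lj oi li; apply; rewrite E addrAC.
pose s0 := [arg max_(s > ord0) #|I s|]%N.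
exists (I s0); split; first exact: indep.
have smax : forall s, (#|I s| <= #|I s0|)%N.
  by rewrite /s0; case: arg_maxnP => // x _ H s; apply: H.
have cnt : (\sum_(s : 'I_M.+2) #|I s| = n * \sum_(t : 'I_M.+2) P t)%N.
  have -> : (\sum_(s : 'I_M.+2) #|I s| = \sum_(s : 'I_M.+2) \sum_(i : 'I_n) P (l i - s)%R)%N.
    by apply: eq_bigr => s _; rewrite -sum1_card big_mkcond /=; apply: eq_bigr => i _; rewrite inE; case: (P _).
  rewrite exchange_big /= -[in RHS](card_ord n) -sum1_card big_distrl /=.
  apply: eq_bigr => i _; rewrite mul1n (reindex_inj (subrI (l i))) /=.
  by apply: eq_bigr => s _; rewrite opprB addrC subrK.
have ck : (k <= \sum_(t : 'I_M.+2) P t)%N.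
  have -> : (\sum_(t : 'I_M.+2) P t = \sum_(0 <= t < M.+2) (odd t && (t < k.*2)%N))%N.
    by rewrite big_mkord.
  rewrite (big_cat_nat _ (n:=k.*2)) //= -{1}(sum_odd k).
  apply: leq_trans (leq_addr _ _).
  rewrite big_nat_cond [X in (_ <= X)%N]big_nat_cond.
  by rewrite leq_eqVlt; apply/orP; left; apply/eqP; apply: eq_bigr => t /andP[/andP[_ ->] _]; rewrite andbT.
have : (\sum_(s : 'I_M.+2) #|I s| <= \sum_(s : 'I_M.+2) #|I s0|)%N by apply: leq_sum => s _.
rewrite sum_nat_const card_ord cnt => h.
rewrite mulnC [X in (_ <= X)%N]mulnC; apply: leq_trans h; by rewrite leq_mul2l ck orbT.
Qed.


Section Geo.
Variable R : realType.

Lemma polar_pos (x y : R) : 0 <= y -> (x, y) != (0, 0) ->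
  exists phi c, 0 <= phi <= pi /\ 0 < c /\ x = c * cos phi /\ y = c * sin phi.
Proof.
move=> y0 nz.
have s0 : 0 < x ^+ 2 + y ^+ 2.
  case: (x =P 0) nz => [-> | /eqP x0] nz.
    have y0' : y != 0 by apply: contra nz => /eqP ->.
    by rewrite expr0n /= add0r lt0r sqr_ge0 expf_neq0.
  by rewrite ltr_pwDl ?sqr_ge0 // lt0r sqr_ge0 expf_neq0.
set r := Num.sqrt (x ^+ 2 + y ^+ 2).
have r0 : 0 < r by rewrite sqrtr_gt0.
have rr : r ^+ 2 = x ^+ 2 + y ^+ 2 by rewrite sqr_sqrtr // ltW.
have hx : -1 <= x / r <= 1.
  rewrite ler_pdivlMr // ler_pdivrMr //.
  apply/andP; split; nra.
exists (acos (x / r)), r; split; first by rewrite acos_ge0 // acos_lepi.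
split => //.
have cx : cos (acos (x / r)) = x / r by rewrite acosK // in_itv /=.
have sg : 0 <= sin (acos (x / r)) by rewrite sin_ge0_pi // acos_ge0 // acos_lepi.
have s2 := sin2cos2 (acos (x / r)).
rewrite cx in s2.
split; first by rewrite cx mulrC divfK // gt_eqF.
set s := sin _ in sg s2 *.
have : (r * s) ^+ 2 = y ^+ 2.
  rewrite exprMn s2 mulrBr mulr1 expr_div_n mulrC divfK ?expf_neq0 ?gt_eqF //. 
  by rewrite rr; lra.
move=> h; apply/eqP; rewrite eq_sym -(@eqrXn2 _ 2) ?h //.
by rewrite mulr_ge0 // ltW.
Qed.

Lemma polar (x y : R) : (x, y) != (0, 0) ->
  exists phi c, 0 <= phi <= pi /\ c != 0 /\ x = c * cos phi /\ y = c * sin phi.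
Proof.
move=> nz; case: (leP 0 y) => y0.
  have [phi [c [h1 [h2 h3]]]] := @polar_pos x y y0 nz.
  by exists phi, c; split => //; split => //; rewrite gt_eqF.
have y0' : 0 <= - y by rewrite oppr_ge0 ltW.
have nz' : (- x, - y) != (0, 0).
  apply: contra nz; rewrite !xpair_eqE !oppr_eq0 //.
have [phi [c [h1 [h2 [h3 h4]]]]] := @polar_pos (-x) (-y) y0' nz'.
exists phi, (- c); split => //; split; first by rewrite oppr_eq0 gt_eqF.
by split; rewrite mulNr -?h3 -?h4 opprK.
Qed.

Lemma vnorm_polar (c phi : R) : vnorm (c * cos phi, c * sin phi) = `|c|.
Proof.
rewrite /vnorm /dot /= -sqrtr_sqr; congr Num.sqrt.
have := cos2Dsin2 phi; rewrite !expr2 => h.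
by rewrite -[RHS]mulr1 -h; ring.
Qed.

Lemma angle_cases (alpha t : R) : 0 < alpha <= pi / 2 -> -pi <= t <= pi ->
  acos `|cos t| = alpha ->
  exists e f : int, (e = 1 \/ e = -1) /\ t = e%:~R * alpha + f%:~R * pi.
Proof.
move=> /andP[a0 a1] /andP[t0 t1] h.
have pi0 := @pi_gt0 R.
have api : alpha <= pi by lra.
have nt : `|t| \in `[0, pi] by rewrite in_itv /= normr_ge0 ler_norml t0 t1.
have ha : alpha \in `[0, pi] by rewrite in_itv /= ltW.
have cb : `|cos t| \in `[(-1), 1].
  by rewrite in_itv /= cos_max andbT (le_trans _ (normr_ge0 _)) // lerN10.
have hc : cos alpha = `|cos `|t| |.
  by rewrite -h acosK // cos_norm.
have key : `|t| = alpha \/ `|t| = pi - alpha.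
  case: (leP 0 (cos `|t|)) => c0.
    left; apply: cos_inj => //. by rewrite hc (ger0_norm c0).
  right; apply: cos_inj => //.
    rewrite in_itv /=; apply/andP; split; lra.
  have e1 := cosDpi (alpha - pi); rewrite subrK in e1.
  rewrite -[in RHS]cosN opprB -[cos (alpha - pi)]opprK -e1 hc (ltr0_norm c0).
  by rewrite opprK.
case: (leP 0 t) => t0'.
  rewrite ger0_norm // in key; case: key => ->.
    by exists 1, 0; split; [left|]; rewrite ?mulr1z ?mulr0z; lra.
  by exists (-1), 1; split; [right|]; rewrite ?mulrN1z ?mulr1z; lra.
rewrite ltr0_norm // in key; case: key => /(congr1 (fun x => - x)); rewrite opprK => ->.
  by exists (-1), 0; split; [right|]; rewrite ?mulrN1z ?mulr0z; lra.
by exists 1, (-1); split; [left|]; rewrite ?mulrN1z ?mulr1z; lra.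
Qed.

Lemma line_angle_polar (s1 s2 : segment R) p1 c1 p2 c2 : c1 != 0 -> c2 != 0 ->
  dir s1 = (c1 * cos p1, c1 * sin p1) -> dir s2 = (c2 * cos p2, c2 * sin p2) ->
  line_angle s1 s2 = acos `|cos (p2 - p1)|.
Proof.
move=> c1n c2n h1 h2; rewrite /line_angle h1 h2 !vnorm_polar; congr acos.
have -> : dot (c1 * cos p1, c1 * sin p1) (c2 * cos p2, c2 * sin p2)
   = (c1 * c2) * cos (p2 - p1) by rewrite /dot /= cosB; ring.
rewrite (normrM (c1 * c2)) -(normrM c1 c2) mulrAC mulfV ?mul1r // normr_eq0 mulf_neq0 //.
Qed.
End Geo.

Section AC.

Variable R : realType.

Lemma AC_odd (alpha : R) (p q : nat) : 0 < alpha -> (0 < q)%N -> coprime p q ->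
  pi / alpha = p%:R / q%:R ->
  forall a b : int, a%:~R * alpha + b%:~R * pi = 0 -> (p%:Z %| a)%Z.
Proof.
move=> a0 q0 cpq h a b e.
have an : alpha != 0 by rewrite gt_eqF.
have qn : (q%:R : R) != 0 by rewrite pnatr_eq0 -lt0n.
have hp : pi = p%:R / q%:R * alpha by rewrite -h divfK.
rewrite hp in e.
have h1 : (a%:~R + b%:~R * (p%:R / q%:R)) * alpha = 0 :> R.
  by rewrite -[RHS]e; ring.
move/eqP: h1; rewrite mulf_eq0 (negbTE an) orbF => /eqP h2.
have e2 : ((a * q%:Z + b * p%:Z)%:~R : R) = 0.
  rewrite intrD !intrM -!pmulrn.
  have -> : a%:~R * (1 *+ q) + b%:~R * (1 *+ p) = (a%:~R + b%:~R * (p%:R / q%:R)) * q%:R :> R.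
    by field.
  by rewrite h2 mul0r.
move/eqP: e2; rewrite intr_eq0 addr_eq0 => /eqP e3.
rewrite -(Gauss_dvdzl _ (p := q%:Z)); last by rewrite coprimezE.
by rewrite e3 rpredN dvdz_mull // dvdzz.
Qed.

Lemma AC_even (alpha : R) : 0 < alpha ->
  (forall p q : nat, (0 < q)%N -> coprime p q -> pi / alpha = p%:R / q%:R -> ~~ odd p) ->
  forall a b : int, a%:~R * alpha + b%:~R * pi = 0 -> (2%:Z %| a)%Z.
Proof.
move=> a0 H a b e.
have an : alpha != 0 by rewrite gt_eqF.
case: (a =P 0) => [-> | /eqP a_n0]; first by rewrite dvdz0.
have b_n0 : b != 0.
  apply: contra a_n0 => /eqP b0; move: e; rewrite b0 mul0r addr0 => /eqP.
  by rewrite mulf_eq0 (negbTE an) orbF intr_eq0.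
set A := `|a|%N; set B := `|b|%N.
have B0 : (0 < B)%N by rewrite absz_gt0.
have A0 : (0 < A)%N by rewrite absz_gt0.
set g := gcdn A B.
have g0 : (0 < g)%N by rewrite gcdn_gt0 B0 orbT.
have hpa : pi / alpha = A%:R / B%:R.
  have bR : (b%:~R : R) != 0 by rewrite intr_eq0.
  have r1 : pi / alpha = - (a%:~R / b%:~R).
    have epi : b%:~R * pi = -(a%:~R * alpha) by apply/eqP; rewrite -addr_eq0 addrC e.
    have hpi : pi = -(a%:~R * alpha) / b%:~R by rewrite -epi; field.
    by rewrite hpi; field; rewrite bR an.
  have pos : 0 < pi / alpha by rewrite divr_gt0 // pi_gt0.
  rewrite r1 in pos *; rewrite -(gtr0_norm pos) normrN normf_div /A /B !natr_absz !intr_norm //.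
have hq : (0 < B %/ g)%N by rewrite divn_gt0 // dvdn_leq // dvdn_gcdr.
have hcop := @coprime_div_gcd' A B B0.
have hpq : pi / alpha = (A %/ g)%:R / (B %/ g)%:R.
  have eA : A = (A %/ g * g)%N by rewrite divnK // dvdn_gcdl.
  have eB : B = (B %/ g * g)%N by rewrite divnK // dvdn_gcdr.
  have yn : ((B %/ g)%N%:R : R) != 0 by rewrite pnatr_eq0 -lt0n.
  have zn : (g%:R : R) != 0 by rewrite pnatr_eq0 -lt0n.
  move: yn zn; rewrite hpa; move: (A %/ g)%N (B %/ g)%N eA eB => A' B' -> -> yn zn.
  by rewrite !natrM; field; rewrite yn zn.
have := H _ _ hq hcop hpq.
rewrite -dvdn2 => hd.
rewrite dvdzE /= -/A -(divnK (dvdn_gcdl A B)).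
exact: dvdn_mulr.
Qed.
End AC.
Lemma Zp_intr_dvd M (x : int) : ((M.+2)%:Z %| x)%Z -> (x%:~R : 'I_M.+2) = 0.
Proof.
move=> /dvdzP[c ->]; rewrite intrM -pmulrn.
have -> : (1 *+ M.+2 : 'I_M.+2) = 0.
  exact: (@pchar_Zp (M.+2) isT).
exact: mulr0.
Qed.

Section Lab.
Variable R : realType.

Lemma labels (n M : nat) (alpha : R) (phi : 'I_n -> R) (adj : 'I_n -> 'I_n -> Prop) :
  (forall a b : int, a%:~R * alpha + b%:~R * pi = 0 -> ((M.+2)%:Z %| a)%Z) ->
  (forall i j, i != j -> adj i j -> exists e f : int, (e = 1 \/ e = -1) /\
       phi j - phi i = e%:~R * alpha + f%:~R * pi) ->
  exists l : 'I_n -> 'I_M.+2, forall i j, i != j -> adj i j -> l j = l i + 1 \/ l i = l j + 1.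
Proof.
move=> AC hadj.
pose E x y := exists a b : int, phi y - phi x = a%:~R * alpha + b%:~R * pi.
have Erefl x : E x x by exists 0, 0; rewrite subrr !mul0r addr0.
have Esym x y : E x y -> E y x.
  by move=> [a [b h]]; exists (- a), (- b); rewrite !intrN !mulNr -opprD -h opprB.
have Etrans x y z : E x y -> E y z -> E x z.
  move=> [a [b h]] [c [d h']]; exists (a + c), (b + d).
  rewrite !intrD !mulrDl; have -> : phi z - phi x = (phi y - phi x) + (phi z - phi y) by ring.
  by rewrite h h'; ring.
pose r i := odflt i [pick j | `[< E j i >]].
have Er i : E (r i) i.
  rewrite /r; case: pickP => [j /asboolP // | /(_ i)]; by rewrite asboolT.
have req i j : E i j -> r i = r j.
  move=> hij; rewrite /r (@eq_pick _ _ (fun x => `[< E x j >])); last first.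
    move=> x; apply/asboolP/asboolP => h; first exact: Etrans h hij.
    exact: Etrans h (Esym _ _ hij).
  case: pickP => [x _ | /(_ i)]; first by [].
  by move/asboolP: (hij) => ->.
have [a ha] := choice (fun i => Er i).
exists (fun i => (a i)%:~R) => i j ij aij.
have [e [f [he hf]]] := hadj i j ij aij.
have Eij : E i j by exists e, f.
have rij := req i j Eij.
have [bi hi] := ha i.
have [bj hj] := ha j.
rewrite -rij in hj.
have key : (a j - a i - e)%:~R * alpha + (bj - bi - f)%:~R * pi = 0.
  rewrite !intrB.
  have -> : ((a j)%:~R - (a i)%:~R - e%:~R) * alpha + (bj%:~R - bi%:~R - f%:~R) * pi
     = ((a j)%:~R * alpha + bj%:~R * pi) - ((a i)%:~R * alpha + bi%:~R * pi)
       - (e%:~R * alpha + f%:~R * pi) :> R by ring.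
  rewrite -hi -hj -hf; ring.
have := @Zp_intr_dvd M _ (AC _ _ key); rewrite !intrB.
case: he => -> h.
  left; apply/eqP; rewrite -subr_eq0 -h; apply/eqP; ring.
right; apply/eqP; rewrite -subr_eq0 -oppr_eq0 -h; apply/eqP.
rewrite (_ : (-1)%:~R = -1) //; ring.
Qed.
End Lab.

Local Open Scope classical_set_scope.
Theorem lemma15 (R : realType) (alpha : R) (n : nat) (S : 'I_n -> segment R)
  (cross : segment R -> segment R -> Prop) :
  0 < alpha <= pi / 2 ->
  (* S is a finite set of (nondegenerate) segments, listed without repetition *)
  (forall i, (S i).1 != (S i).2) ->
  (forall i j, seg_set (S i) = seg_set (S j) -> i = j) ->
  (* the crossing notion: standard, or relaxed w.r.t. a set V of endpoints of S *)
  (cross = @std_cross R \/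
   exists V : set (pt R),
     V `<=` [set p | exists i, p = (S i).1 \/ p = (S i).2] /\
     cross = relaxed_cross V) ->
  (* any two segments of S that cross do so at angle alpha *)
  (forall i j, i != j -> cross (S i) (S j) -> cross_at_angle alpha (S i) (S j)) ->
  ((forall p q : nat, (0 < q)%N -> coprime p q ->
       pi / alpha = p%:R / q%:R -> ~~ odd p) ->
   exists I : {set 'I_n},
     (forall i j, i \in I -> j \in I -> i != j -> ~ cross (S i) (S j)) /\
     (#|I|%:R >= 2^-1 * n%:R :> R))
  /\
  (forall k q : nat, (0 < q)%N -> coprime k.*2.+1 q ->
       pi / alpha = k.*2.+1%:R / q%:R ->
   exists I : {set 'I_n},
     (forall i j, i \in I -> j \in I -> i != j -> ~ cross (S i) (S j)) /\
     (#|I|%:R >= k%:R / k.*2.+1%:R * n%:R :> R)).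
Proof.
move=> Ha Hnd Hinj Hcr Hang.
have pi0 := @pi_gt0 R.
have a0 : 0 < alpha by case/andP: Ha.
have hpol : forall i, exists pc : R * R, (0 <= pc.1 <= pi) /\ pc.2 != 0 /\
    dir (S i) = (pc.2 * cos pc.1, pc.2 * sin pc.1).
  move=> i.
  have nz : dir (S i) != (0, 0).
    apply: contra (Hnd i); case: (S i) => [[x1 y1] [x2 y2]].
    by rewrite /dir /= xpair_eqE !subr_eq0 => /andP[/eqP -> /eqP ->].
  case: (dir (S i)) nz => x y nz.
  have [phi [c [h1 [h2 [h3 h4]]]]] := @polar R x y nz.
  by exists (phi, c); rewrite h3 h4.
have [pc hpc] := choice hpol.
pose phi i := (pc i).1.
have hadj : forall i j, i != j -> cross (S i) (S j) -> exists e f : int,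
    (e = 1 \/ e = -1) /\ phi j - phi i = e%:~R * alpha + f%:~R * pi.
  move=> i j ij cij.
  have := Hang i j ij cij; rewrite /cross_at_angle.
  have [hi1 [hi2 hi3]] := hpc i; have [hj1 [hj2 hj3]] := hpc j.
  rewrite (@line_angle_polar R _ _ _ _ _ _ hi2 hj2 hi3 hj3) => h.
  apply: (@angle_cases R alpha _ Ha _ h).
  case/andP: hi1 => ? ?; case/andP: hj1 => ? ?; rewrite /phi; apply/andP; split; lra.
have gen : forall M k, (k.*2 <= M.+2)%N ->
    (forall a b : int, a%:~R * alpha + b%:~R * pi = 0 -> ((M.+2)%:Z %| a)%Z) ->
    exists I : {set 'I_n},
     (forall i j, i \in I -> j \in I -> i != j -> ~ cross (S i) (S j)) /\
     (k * n <= #|I| * M.+2)%N.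
  move=> M k hk AC.
  have [l hl] := @labels R n M alpha phi _ AC hadj.
  exact: (@comb n M k _ _ hk hl).
split.
  move=> Hev.
  have [I [HI hI]] := @gen 0%N 1%N isT (@AC_even R alpha a0 Hev).
  exists I; split => //.
  move: hI; rewrite mul1n -(ler_nat R) natrM => hI.
  have -> : (2 : R) = 0.+2%:R by [].
  lra.
move=> k q q0 cop hpi.
case: k cop hpi => [|k'] cop hpi.
  exists (finset.set0 : {set 'I_n}); split; first by move=> i j; rewrite inE.
  by rewrite cards0 !mul0r.
have [I [HI hI]] := @gen (k'.*2.+1) k'.+1 (leqnSn _) (@AC_odd R alpha _ _ a0 q0 cop hpi).
exists I; split => //.
move: hI; rewrite -(ler_nat R) !natrM => hI.
rewrite mulrAC ler_pdivrMr ?ltr0n //.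
Qed.
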